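(* Let $a\in[0,1)$, let $\{v_n\}_{n=1}^\infty\subset\mathbb{C}$ and $V=\mathrm{diag}(v_1,v_2,\dots)$. Let $K'$ be the semi-infinite matrix with entries $K'_{m,n}:=\sqrt{|v_m|}\big[\frac{a}{1-a}+\min(m,n)\big]\sqrt{|v_n|}$, $m,n\in\mathbb{N}$. If $K'$, regarded as an operator on $\ell^2(\mathbb{N})$, satisfies $\|K'\|\le1$, then $\sigma_{\mathrm d}(J_a+V)=\emptyset$. Equivalently (the two conditions being equivalent), if $|V|\le-\Delta_a$ in the sense of quadratic forms, then $\sigma_{\mathrm d}(J_a+V)=\emptyset$.
   Context: $\mathbb{N}=\{1,2,\dots\}$. For $a\in\mathbb{C}$, $J_a$ is the operator on $\ell^2(\mathbb{N})$ with $(J_a\psi)_1=a\psi_1+\psi_2$ and $(J_a\psi)_n=\psi_{n-1}+\psi_{n+1}$ for $n\ge2$; $-\Delta_a:=2-J_a$; $|V|=\mathrm{diag}(|v_1|,|v_2|,\dots)$. $\sigma_{\mathrm d}$ denotes the discrete spectrum (isolated eigenvalues of finite algebraic multiplicity). *)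

(* Defs.v *)
From Stdlib Require Import Reals Lra.
From Coquelicot Require Import Coquelicot.

Open Scope R_scope.

(* Indexing convention: the paper's index n in {1,2,...} is our index n-1 in nat. *)

Fixpoint csum (N : nat) (f : nat -> C) : C :=
  match N with O => RtoC 0 | S k => Cplus (csum k f) (f k) end.
Fixpoint rsum (N : nat) (f : nat -> R) : R :=
  match N with O => 0 | S k => rsum k f + f k end.

Definition in_l2 (psi : nat -> C) : Prop :=
  ex_series (fun n => (Cmod (psi n)) ^ 2).

Definition JV (a : R) (v : nat -> C) (psi : nat -> C) : nat -> C :=
  fun n => match n with
  | O => Cplus (Cplus (Cmult (RtoC a) (psi O)) (psi 1%nat)) (Cmult (v O) (psi O))
  | S k => Cplus (Cplus (psi k) (psi (S (S k)))) (Cmult (v (S k)) (psi (S k)))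
  end.

(* Generic operator given by its action on sequences, with maximal domain
   dom T = { psi in l^2 : T psi in l^2 }. *)
Definition in_dom (T : (nat -> C) -> (nat -> C)) (psi : nat -> C) : Prop :=
  in_l2 psi /\ in_l2 (T psi).

Definition shift_op (T : (nat -> C) -> (nat -> C)) (z : C) (psi : nat -> C) : nat -> C :=
  fun n => Cminus (T psi n) (Cmult z (psi n)).

(* z in the resolvent set: T - z is a bijection from dom T onto l^2
   (the inverse is then bounded by the closed graph theorem). *)
Definition in_resolvent (T : (nat -> C) -> (nat -> C)) (z : C) : Prop :=
  forall phi, in_l2 phi ->
    exists psi, in_dom T psi /\ (forall n, shift_op T z psi n = phi n) /\
      forall psi', in_dom T psi' -> (forall n, shift_op T z psi' n = phi n) ->
        forall n, psi' n = psi n.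

Definition in_spectrum T z : Prop := ~ in_resolvent T z.

Definition is_eigenvalue (T : (nat -> C) -> (nat -> C)) (z : C) : Prop :=
  exists psi, in_dom T psi /\ (exists n, psi n <> RtoC 0) /\
    forall n, T psi n = Cmult z (psi n).

Definition isolated_in_spectrum T (z : C) : Prop :=
  in_spectrum T z /\
  exists eps, 0 < eps /\
    forall w, 0 < Cmod (Cminus w z) < eps -> in_resolvent T w.

Definition in_gen_eigenspace T (z : C) (psi : nat -> C) : Prop :=
  exists k : nat,
    (forall j, (j <= k)%nat -> in_l2 (Nat.iter j (shift_op T z) psi)) /\
    forall n, Nat.iter k (shift_op T z) psi n = RtoC 0.

Definition finite_alg_mult T (z : C) : Prop :=
  exists (N : nat) (b : nat -> nat -> C),
    forall psi, in_gen_eigenspace T z psi ->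
      exists c : nat -> C, forall n, psi n = csum N (fun i => Cmult (c i) (b i n)).

Definition in_discrete_spectrum T (z : C) : Prop :=
  is_eigenvalue T z /\ isolated_in_spectrum T z /\ finite_alg_mult T z.

(* Matrix K' (0-based indices: paper's (m,n) = our (m+1,n+1)). *)
Definition Kp (a : R) (v : nat -> C) (m n : nat) : R :=
  sqrt (Cmod (v m)) * (a / (1 - a) + INR (S (Nat.min m n))) * sqrt (Cmod (v n)).

(* ||K'|| <= 1 as an operator on l^2(N): on finitely supported vectors
   (supported in the first N coordinates), ||K' psi||^2 <= ||psi||^2
   (the row truncation M is arbitrary). *)
Definition Kp_norm_le1 (a : R) (v : nat -> C) : Prop :=
  forall (psi : nat -> C) (N M : nat),
    rsum M (fun m => (Cmod (csum N (fun k => Cmult (RtoC (Kp a v m k)) (psi k)))) ^ 2)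
    <= rsum N (fun k => (Cmod (psi k)) ^ 2).

(* Main.v *)
Require Import Defs.
From Stdlib Require Import Reals Lra Lia Classical.
From Coquelicot Require Import Coquelicot.
Open Scope R_scope.

Lemma rsum_nonneg N f : (forall n, 0 <= f n) -> 0 <= rsum N f.
Proof. intro H; induction N; simpl; [lra| specialize (H N); lra]. Qed.

Lemma rsum_le N f g : (forall n, (n < N)%nat -> f n <= g n) -> rsum N f <= rsum N g.
Proof. induction N; intro H; simpl; [lra|].
  assert (H1 := H N (Nat.lt_succ_diag_r N)). assert (rsum N f <= rsum N g) by (apply IHN; intros; apply H; lia). lra. Qed.

Lemma rsum_ext N f g : (forall n, (n < N)%nat -> f n = g n) -> rsum N f = rsum N g.
Proof. induction N; intro H; simpl; [lra|].
  rewrite (H N) by lia. rewrite IHN; [lra|]. intros; apply H; lia. Qed.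

Lemma rsum_mono N M f : (forall n, 0 <= f n) -> (N <= M)%nat -> rsum N f <= rsum M f.
Proof. intros H HNM. induction HNM; simpl; [lra|]. specialize (H m); lra. Qed.

Lemma rsum_term N f m : (forall n, 0 <= f n) -> (m < N)%nat -> f m <= rsum N f.
Proof. intros H Hm.
  assert (rsum (S m) f <= rsum N f) by (apply rsum_mono; auto).
  simpl in H0. assert (0 <= rsum m f) by (apply rsum_nonneg; auto). lra. Qed.

Lemma rsum_scal N c f : rsum N (fun n => c * f n) = c * rsum N f.
Proof. induction N; simpl; [ring|rewrite IHN; ring]. Qed.

Lemma rsum_plus N f g : rsum N (fun n => f n + g n) = rsum N f + rsum N g.
Proof. induction N; simpl; [ring|rewrite IHN; ring]. Qed.

Lemma rsum_sum_f N f : rsum (S N) f = sum_f_R0 f N.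
Proof. induction N; simpl; [ring|]. simpl in IHN. rewrite <- IHN. ring. Qed.

Lemma csum_RtoC N x : csum N (fun k => RtoC (x k)) = RtoC (rsum N x).
Proof. induction N; simpl; [reflexivity|]. rewrite IHN. unfold RtoC, Cplus; simpl. f_equal; ring. Qed.

Lemma csum_ind N k (c : nat -> C) :
  csum N (fun j => Cmult (c j) (if Nat.eqb j k then RtoC 1 else RtoC 0)) =
  if Nat.ltb k N then c k else RtoC 0.
Proof. induction N; simpl; [reflexivity|]. rewrite IHN.
  destruct (Nat.eqb N k) eqn:E.
  - apply Nat.eqb_eq in E; subst. rewrite (proj2 (Nat.ltb_ge k k)) by lia.
    rewrite (proj2 (Nat.ltb_lt k (S k))) by lia. 
    apply injective_projections; simpl; ring.
  - apply Nat.eqb_neq in E. destruct (Nat.ltb k N) eqn:E2.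
    + apply Nat.ltb_lt in E2. rewrite (proj2 (Nat.ltb_lt k (S N))) by lia.
      apply injective_projections; simpl; ring.
    + apply Nat.ltb_ge in E2. rewrite (proj2 (Nat.ltb_ge k (S N))) by lia.
      apply injective_projections; simpl; ring.
Qed.

Lemma series_sup (f : nat -> R) : (forall n, 0 <= f n) -> ex_series f ->
  exists X, (forall N, rsum N f <= X) /\ (forall Y, (forall N, rsum N f <= Y) -> X <= Y).
Proof.
  intros Hpos [l Hl]. apply is_series_Reals in Hl.
  assert (HB : forall N, rsum N f <= l).
  { intro N. destruct N. simpl. 
    - assert (sum_f_R0 f 0 <= l) by (apply sum_incr; auto). simpl in H. specialize (Hpos 0%nat). lra.
    - rewrite rsum_sum_f. apply sum_incr; auto. }
  destruct (completeness (fun x => exists N, x = rsum N f)) as [m [Hm1 Hm2]].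
  - exists l. intros x [N ->]. apply HB.
  - exists 0, 0%nat. reflexivity.
  - exists m. split.
    + intro N. apply Hm1. eauto.
    + intros Y HY. apply Hm2. intros x [N ->]. apply HY.
Qed.

Lemma l2_lim (psi : nat -> C) : in_l2 psi -> forall eps, 0 < eps ->
  exists N, forall n, (N <= n)%nat -> Cmod (psi n) ^ 2 < eps.
Proof.
  intros H eps He. apply ex_series_lim_0 in H. apply is_lim_seq_Reals in H.
  destruct (H eps He) as [N HN]. exists N. intros n Hn. specialize (HN n Hn).
  unfold Rdist in HN. rewrite Rminus_0_r in HN. 
  rewrite Rabs_right in HN; [lra|]. apply Rle_ge, pow2_ge_0.
Qed.

Definition Bd (a : R) (p : nat) := a / (1 - a) + INR (S p).

Lemma Bd_ge1 a p : 0 <= a < 1 -> 1 <= Bd a p.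
Proof. intro Ha. unfold Bd. rewrite S_INR. assert (0 <= a / (1 - a)).
  { apply Rdiv_le_0_compat; lra. } assert (0 <= INR p) by apply pos_INR. lra. Qed.

Lemma Bd_mono a p q : (p <= q)%nat -> Bd a p <= Bd a q.
Proof. intro H. unfold Bd. apply Rplus_le_compat_l. apply le_INR. lia. Qed.

Lemma sqrtC_sq x : sqrt (Cmod x) * sqrt (Cmod x) = Cmod x.
Proof. apply sqrt_sqrt, Cmod_ge_0. Qed.

Lemma Kp_lb a v m k : 0 <= a < 1 -> Cmod (v m) * Cmod (v k) <= Kp a v m k ^ 2.
Proof. intro Ha. unfold Kp. fold (Bd a (Nat.min m k)).
  assert (H1 := Bd_ge1 a (Nat.min m k) Ha).
  assert (0 <= sqrt (Cmod (v m))) by apply sqrt_pos.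
  assert (0 <= sqrt (Cmod (v k))) by apply sqrt_pos.
  assert (Hm := sqrtC_sq (v m)). assert (Hk := sqrtC_sq (v k)).
  set (x := sqrt (Cmod (v m))) in *. set (y := sqrt (Cmod (v k))) in *.
  rewrite <- Hm, <- Hk.
  set (B := Bd a (Nat.min m k)) in *.
  assert (0 <= x*y) by nra. assert (x*y <= x*B*y) by nra.
  replace (x*x*(y*y)) with ((x*y)*(x*y)) by ring. simpl. rewrite Rmult_1_r.
  apply Rmult_le_compat; lra. Qed.

Lemma Kp_nonneg a v m k : 0 <= a < 1 -> 0 <= Kp a v m k.
Proof. intro Ha. unfold Kp. fold (Bd a (Nat.min m k)).
  assert (H1 := Bd_ge1 a (Nat.min m k) Ha).
  assert (0 <= sqrt (Cmod (v m))) by apply sqrt_pos.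
  assert (0 <= sqrt (Cmod (v k))) by apply sqrt_pos. 
  apply Rmult_le_pos; [apply Rmult_le_pos|]; lra. Qed.

Lemma rsum_ind N k : rsum N (fun j => Cmod (if Nat.eqb j k then RtoC 1 else RtoC 0) ^ 2)
  = if Nat.ltb k N then 1 else 0.
Proof. induction N; [reflexivity|]. cbn [rsum]. rewrite IHN.
  destruct (Nat.eqb N k) eqn:E.
  - apply Nat.eqb_eq in E; subst. rewrite (proj2 (Nat.ltb_ge k k)) by lia.
    rewrite (proj2 (Nat.ltb_lt k (S k))) by lia. rewrite Cmod_1. ring.
  - apply Nat.eqb_neq in E. rewrite Cmod_0. destruct (Nat.ltb k N) eqn:E2.
    + apply Nat.ltb_lt in E2. rewrite (proj2 (Nat.ltb_lt k (S N))) by lia. ring.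
    + apply Nat.ltb_ge in E2. rewrite (proj2 (Nat.ltb_ge k (S N))) by lia. ring.
Qed.

Lemma Kp_col a v : Kp_norm_le1 a v -> forall k M, rsum M (fun m => Kp a v m k ^ 2) <= 1.
Proof. intros HK k M.
  specialize (HK (fun j => if Nat.eqb j k then RtoC 1 else RtoC 0) (S k) M).
  cbv beta in HK. rewrite rsum_ind in HK. rewrite (proj2 (Nat.ltb_lt k (S k))) in HK by lia.
  erewrite rsum_ext in HK. exact HK.
  intros m _. cbv beta. rewrite csum_ind. rewrite (proj2 (Nat.ltb_lt k (S k))) by lia.
  rewrite Cmod_R. rewrite pow2_abs. reflexivity.
Qed.

Lemma v_le1 a v : 0 <= a < 1 -> Kp_norm_le1 a v -> forall n, Cmod (v n) <= 1.
Proof. intros Ha HK n. assert (H := Kp_col a v HK n (S n)).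
  assert (Kp a v n n ^ 2 <= rsum (S n) (fun m => Kp a v m n ^ 2)).
  { apply (rsum_term (S n) (fun m => Kp a v m n ^ 2)); [intro; apply pow2_ge_0| lia]. }
  assert (H2 := Kp_lb a v n n Ha). assert (0 <= Cmod (v n)) by apply Cmod_ge_0. nra. Qed.

Lemma v_sum a v : 0 <= a < 1 -> Kp_norm_le1 a v -> exists S, forall M, rsum M (fun m => Cmod (v m)) <= S.
Proof. intros Ha HK.
  destruct (classic (exists k, 0 < Cmod (v k))) as [[k Hk]|Hn].
  - exists (/ Cmod (v k)). intro M. assert (H := Kp_col a v HK k M).
    assert (rsum M (fun m => Cmod (v m) * Cmod (v k)) <= 1).
    { eapply Rle_trans; [|exact H]. apply rsum_le. intros; apply Kp_lb; auto. }
    rewrite (rsum_ext M _ (fun m => Cmod (v k) * Cmod (v m))) in H0 by (intros; ring).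
    rewrite rsum_scal in H0. apply Rmult_le_reg_l with (Cmod (v k)); auto.
    rewrite Rinv_r; lra.
  - exists 0. intro M. assert (forall m, Cmod (v m) = 0).
    { intro m. assert (H0 := Cmod_ge_0 (v m)). destruct (Req_dec (Cmod (v m)) 0); auto.
      exfalso; apply Hn; exists m; lra. }
    rewrite (rsum_ext M _ (fun _ => 0 * 0)) by (intros; rewrite H; ring).
    rewrite rsum_scal. lra.
Qed.

Lemma exp_le' x y : x <= y -> exp x <= exp y.
Proof. intro H. destruct (Rle_lt_or_eq_dec _ _ H) as [H1|H1].
  - left. apply exp_increasing; auto. - subst; lra. Qed.

Definition Qf (w : R) (P A : C) : R := Cmod A ^ 2 + Cmod P ^ 2 - w * Re (Cmult A (Cconj P)).

Lemma Re_conj_bound x y : Rabs (Re (Cmult x (Cconj y))) <= Cmod x * Cmod y.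
Proof. eapply Rle_trans; [apply re_le_Cmod|]. rewrite Cmod_mult, Cmod_conj. lra. Qed.

Lemma wr_bound w r b : Rabs r <= b -> w * r <= Rabs w * b.
Proof. intro H. eapply Rle_trans; [apply Rle_abs|]. rewrite Rabs_mult.
  apply Rmult_le_compat_l; [apply Rabs_pos|auto]. Qed.

Lemma Q_lower w P A : Rabs w < 2 -> (1 - Rabs w / 2) * (Cmod A ^ 2 + Cmod P ^ 2) <= Qf w P A.
Proof. intro Hw. unfold Qf. assert (H := wr_bound w _ _ (Re_conj_bound A P)).
  assert (0 <= Cmod A) by apply Cmod_ge_0. assert (0 <= Cmod P) by apply Cmod_ge_0.
  assert (0 <= Rabs w) by apply Rabs_pos.
  assert (2 * (Cmod A * Cmod P) <= Cmod A ^ 2 + Cmod P ^ 2) by (pose proof (pow2_ge_0 (Cmod A - Cmod P)); nra).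
  assert (Rabs w * (Cmod A * Cmod P) <= Rabs w * ((Cmod A ^ 2 + Cmod P ^ 2)/2)) by
    (apply Rmult_le_compat_l; lra).
  replace ((1 - Rabs w / 2) * (Cmod A ^ 2 + Cmod P ^ 2)) with
    (Cmod A ^ 2 + Cmod P ^ 2 - Rabs w * ((Cmod A ^ 2 + Cmod P ^ 2) / 2)) by field. lra. Qed.

Lemma Q_upper w P A : Rabs w < 2 -> Qf w P A <= 2 * (Cmod A ^ 2 + Cmod P ^ 2).
Proof. intro Hw. unfold Qf. assert (H := Re_conj_bound A P).
  assert (H' : - (w * Re (Cmult A (Cconj P))) <= Rabs w * (Cmod A * Cmod P)).
  { apply (wr_bound (-w)) in H. rewrite Rabs_Ropp in H. lra. }
  assert (0 <= Cmod A) by apply Cmod_ge_0. assert (0 <= Cmod P) by apply Cmod_ge_0.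
  assert (0 <= Rabs w) by apply Rabs_pos.
  assert (2 * (Cmod A * Cmod P) <= Cmod A ^ 2 + Cmod P ^ 2) by (pose proof (pow2_ge_0 (Cmod A - Cmod P)); nra).
  assert (Rabs w * (Cmod A * Cmod P) <= Rabs w * ((Cmod A ^ 2 + Cmod P ^ 2)/2)) by
    (apply Rmult_le_compat_l; lra).
  assert (Rabs w * ((Cmod A ^ 2 + Cmod P ^ 2) / 2) <= 2 * ((Cmod A ^ 2 + Cmod P ^ 2) / 2)) by
    (apply Rmult_le_compat_r; nra). lra. Qed.

Lemma Q_ident w P A B vv :
  Cminus (Cplus (Cplus P B) (Cmult vv A)) (Cmult (RtoC w) A) = RtoC 0 ->
  Qf w P A = Qf w A B - 2 * Re (Cmult (Cminus (Cmult (RtoC w) A) B) (Cconj (Cmult vv A)))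
     + Cmod (Cmult vv A) ^ 2 + w * Re (Cmult A (Cconj (Cmult vv A))).
Proof. intro H. unfold Qf. rewrite !Cmod2_alt.
  destruct P as [p1 p2], A as [a1 a2], B as [b1 b2], vv as [q1 q2].
  unfold Cminus, Cplus, Cmult, Copp, RtoC, Cconj in *. simpl in *.
  injection H; intros H2 H1.
  assert (p1 = w * a1 - b1 - (q1 * a1 - q2 * a2)) by lra.
  assert (p2 = w * a2 - b2 - (q1 * a2 + q2 * a1)) by lra.
  subst. unfold Re, Im. simpl. ring. Qed.

Lemma Q_step w P A B vv : Rabs w < 2 -> Cmod vv <= 1 ->
  Cminus (Cplus (Cplus P B) (Cmult vv A)) (Cmult (RtoC w) A) = RtoC 0 ->
  Qf w P A <= (1 + 8 / (1 - Rabs w / 2) * Cmod vv) * Qf w A B.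
Proof. intros Hw Hv H. rewrite (Q_ident w P A B vv H).
  set (P0 := Cminus (Cmult (RtoC w) A) B).
  assert (HP0 : Cmod P0 <= 2 * Cmod A + Cmod B).
  { unfold P0, Cminus. eapply Rle_trans; [apply Cmod_triangle|].
    rewrite Cmod_opp, Cmod_mult, Cmod_R. assert (0 <= Cmod A) by apply Cmod_ge_0.
    assert (Rabs w * Cmod A <= 2 * Cmod A) by (apply Rmult_le_compat_r; lra). lra. }
  assert (H1 := Re_conj_bound P0 (Cmult vv A)).
  assert (H2 := wr_bound w _ _ (Re_conj_bound A (Cmult vv A))).
  rewrite Cmod_mult in *.
  assert (HL := Q_lower w A B Hw).
  set (mA := Cmod A) in *. set (mB := Cmod B) in *. set (mv := Cmod vv) in *.
  set (mP := Cmod P0) in *. set (QAB := Qf w A B) in *.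
  set (r1 := Re (Cmult P0 (Cconj (Cmult vv A)))) in *.
  set (r2 := Re (Cmult A (Cconj (Cmult vv A)))) in *.
  assert (0 <= mA) by apply Cmod_ge_0. assert (0 <= mB) by apply Cmod_ge_0.
  assert (0 <= mv) by apply Cmod_ge_0. assert (0 <= mP) by apply Cmod_ge_0.
  assert (0 <= Rabs w) by apply Rabs_pos.
  assert (E1 : - 2 * r1 <= 2 * ((2 * mA + mB) * (mv * mA))).
  { assert (mP * (mv * mA) <= (2 * mA + mB) * (mv * mA)) by (apply Rmult_le_compat_r; nra).
    assert (- r1 <= Rabs r1) by (rewrite <- Rabs_Ropp; apply Rle_abs). lra. }
  assert (E2 : (mv * mA) ^ 2 <= mv * mA ^ 2).
  { assert (mv * mv <= mv * 1) by (apply Rmult_le_compat_l; lra). 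
    replace ((mv * mA) ^ 2) with ((mv * mv) * (mA * mA)) by ring.
    replace (mv * mA ^ 2) with ((mv * 1) * (mA * mA)) by ring.
    apply Rmult_le_compat_r; nra. }
  assert (E3 : Rabs w * (mA * (mv * mA)) <= 2 * (mv * mA ^ 2)).
  { replace (mA * (mv * mA)) with (mv * mA ^ 2) by ring. apply Rmult_le_compat_r; nra. }
  assert (E4 : 2 * mA * mB <= mA ^ 2 + mB ^ 2) by (pose proof (pow2_ge_0 (mA - mB)); nra).
  assert (E5 : mv * (2 * mA * mB) <= mv * (mA ^ 2 + mB ^ 2)) by (apply Rmult_le_compat_l; lra).
  assert (D : - 2 * r1 + (mv * mA) ^ 2 + w * r2 <= 8 * mv * (mA ^ 2 + mB ^ 2)) by nra.
  set (c := 1 - Rabs w / 2) in *. assert (Hc : 0 < c) by (unfold c; lra).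
  assert (E6 : mA ^ 2 + mB ^ 2 <= QAB / c).
  { apply Rmult_le_reg_l with c; auto. field_simplify; [|lra]. lra. }
  assert (E7 : 8 * mv * (mA ^ 2 + mB ^ 2) <= 8 / c * mv * QAB).
  { replace (8 / c * mv * QAB) with (8 * mv * (QAB / c)) by (field; lra).
    apply Rmult_le_compat_l; nra. }
  nra.
Qed.

Lemma no_l2_sol (w : R) (v psi : nat -> C) (Sv : R) :
  Rabs w < 2 -> (forall n, Cmod (v n) <= 1) ->
  (forall M, rsum M (fun m => Cmod (v m)) <= Sv) -> in_l2 psi ->
  (forall n, Cminus (Cplus (Cplus (psi n) (psi (S (S n)))) (Cmult (v (S n)) (psi (S n))))
               (Cmult (RtoC w) (psi (S n))) = RtoC 0) ->
  forall n, psi n = RtoC 0.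
Proof.
  intros Hw Hv HS Hl Hrec.
  set (Q := fun n => Qf w (psi n) (psi (S n))).
  set (Cc := 8 / (1 - Rabs w / 2)).
  set (mv := fun m => Cmod (v m)).
  assert (HCc : 0 < Cc) by (unfold Cc; apply Rdiv_lt_0_compat; lra).
  assert (Qnn : forall n, 0 <= Q n).
  { intro n. eapply Rle_trans; [|apply Q_lower; auto].
    apply Rmult_le_pos; [lra|]. assert (H1 := pow2_ge_0 (Cmod (psi (S n)))).
    assert (H2 := pow2_ge_0 (Cmod (psi n))). lra. }
  assert (Hstep : forall n, Q n <= (1 + Cc * mv (S n)) * Q (S n)).
  { intro n. apply Q_step; auto. }
  assert (Hiter : forall t N, Q N <= exp (Cc * (rsum (S (N + t)%nat) mv - rsum (S N) mv)) * Q (N + t)%nat).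
  { induction t; intro N.
    - rewrite Nat.add_0_r. replace (Cc * (rsum (S N) mv - rsum (S N) mv)) with 0 by ring.
      rewrite exp_0. lra.
    - eapply Rle_trans; [apply IHt|]. rewrite Nat.add_succ_r.
      replace (rsum (S (S (N + t)%nat)) mv) with (rsum (S (N + t)%nat) mv + mv (S (N + t)%nat)) by reflexivity.
      replace (Cc * (rsum (S (N + t)%nat) mv + mv (S (N + t)%nat) - rsum (S N) mv)) with
        (Cc * (rsum (S (N + t)%nat) mv - rsum (S N) mv) + Cc * mv (S (N + t)%nat)) by ring.
      rewrite exp_plus. rewrite Rmult_assoc. apply Rmult_le_compat_l; [left; apply exp_pos|].
      eapply Rle_trans; [apply Hstep|]. apply Rmult_le_compat_r; [apply Qnn|].
      apply exp_ineq1_le. }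
  set (E := exp (Cc * Sv)).
  assert (HE : 0 < E) by apply exp_pos.
  assert (Hb : forall t N, Q N <= E * Q (N + t)%nat).
  { intros t N. eapply Rle_trans; [apply Hiter|]. apply Rmult_le_compat_r; [apply Qnn|].
    apply exp_le'. apply Rmult_le_compat_l; [lra|].
    assert (0 <= rsum (S N) mv) by (apply rsum_nonneg; intro; apply Cmod_ge_0).
    specialize (HS (S (N + t)%nat)). fold mv in HS. lra. }
  assert (HQ0 : forall N, Q N <= 0).
  { intro N. destruct (Rle_or_lt (Q N) 0) as [H|H]; auto. exfalso.
    destruct (l2_lim psi Hl (Q N / (8 * E))) as [N0 HN0].
    { apply Rdiv_lt_0_compat; lra. }
    assert (H1 := HN0 (N + N0)%nat ltac:(lia)). assert (H2 := HN0 (S (N + N0)%nat) ltac:(lia)).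
    assert (H3 := Q_upper w (psi (N + N0)%nat) (psi (S (N + N0)%nat)) Hw).
    assert (H4 := Hb N0 N). unfold Q at 2 in H4.
    assert (Q (N) <= E * (4 * (Q N / (8 * E)))).
    { eapply Rle_trans; [apply H4|]. apply Rmult_le_compat_l; lra. }
    replace (E * (4 * (Q N / (8 * E)))) with (Q N / 2) in H0 by (field; lra). lra. }
  intro n. apply Cmod_eq_0. assert (H := Q_lower w (psi n) (psi (S n)) Hw).
  fold (Q n) in H. assert (H0 := HQ0 n).
  assert (H1 := pow2_ge_0 (Cmod (psi (S n)))). assert (H2 := pow2_ge_0 (Cmod (psi n))).
  assert (Cmod (psi n) ^ 2 = 0).
  { assert ((1 - Rabs w / 2) * (Cmod (psi (S n)) ^ 2 + Cmod (psi n) ^ 2) <= 0) by lra.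
    assert (Cmod (psi (S n)) ^ 2 + Cmod (psi n) ^ 2 <= 0).
    { apply Rmult_le_reg_l with (1 - Rabs w / 2); lra. } lra. }
  destruct (Req_dec (Cmod (psi n)) 0) as [Hz|Hz]; auto. exfalso; exact (pow_nonzero _ 2 Hz H3).
Qed.

Fixpoint sq (a : R) (k : C) (p : nat) : C :=
  match p with O => RtoC 1 | S q => (k * k * sq a k q + (1 - RtoC a * k))%C end.

Fixpoint Tq (a : R) (k : C) (f : nat -> C) (n : nat) : C :=
  match n with O => (sq a k 0 * f O)%C | S m => (k * Tq a k f m + sq a k (S m) * f (S m))%C end.

Fixpoint Uq (a : R) (k : C) (f : nat -> C) (n t : nat) : C :=
  match t with O => RtoC 0 | S t' => (Uq a k f n t' + sq a k n * k ^ (S t') * f (S n + t')%nat)%C end.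

Section Rep.
Variables (a : R) (k z : C) (v psi : nat -> C).
Hypothesis Hk0 : k <> RtoC 0.
Hypothesis Hz : z = (k + / k)%C.
Hypothesis Heig : forall n, JV a v psi n = (z * psi n)%C.
Let f := fun n => Copp (Cmult (v n) (psi n)).

Lemma f0 : f O = (RtoC a * psi O + psi 1%nat - z * psi O)%C.
Proof. assert (E := Heig O). simpl in E. unfold f. rewrite <- E. ring. Qed.

Lemma fS n : f (S n) = (psi n + psi (S (S n)) - z * psi (S n))%C.
Proof. assert (E := Heig (S n)). simpl in E. unfold f. rewrite <- E. ring. Qed.

Lemma T_rel : forall n, (k * Tq a k f n = k * sq a k n * psi (S n) - sq a k (S n) * psi n)%C.
Proof. induction n.
  - simpl. rewrite f0. subst z. field. auto.
  - change (Tq a k f (S n)) with (k * Tq a k f n + sq a k (S n) * f (S n))%C.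
    rewrite Cmult_plus_distr_l, IHn, fS.
    change (sq a k (S (S n))) with (k * k * sq a k (S n) + (1 - RtoC a * k))%C.
    change (sq a k (S n)) with (k * k * sq a k n + (1 - RtoC a * k))%C.
    subst z. field. auto.
Qed.

Lemma W_rel : forall n t,
  (Uq a k f n t + sq a k n * k ^ t * (k * psi (n + t)%nat - psi (S (n + t))))%C
  = (sq a k n * (k * psi n - psi (S n)))%C.
Proof. intros n t. induction t.
  - simpl. rewrite Nat.add_0_r. ring.
  - rewrite <- IHt. change (Uq a k f n (S t)) with (Uq a k f n t + sq a k n * k ^ (S t) * f (S n + t)%nat)%C.
    replace (S n + t)%nat with (S (n + t)) by lia. rewrite Nat.add_succ_r. rewrite fS.
    change (k ^ S t)%C with (k * k ^ t)%C. subst z. field. auto.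
Qed.

Lemma rep : forall n t,
  ((1 - RtoC a * k) * psi n = - k * (Tq a k f n + Uq a k f n t + sq a k n * k ^ t * (k * psi (n + t)%nat - psi (S (n + t)))))%C.
Proof. intros n t.
  replace (- k * (Tq a k f n + Uq a k f n t + sq a k n * k ^ t * (k * psi (n + t)%nat - psi (S (n + t)))))%C
    with (- (k * Tq a k f n) - k * (Uq a k f n t + sq a k n * k ^ t * (k * psi (n + t)%nat - psi (S (n + t)))))%C by ring.
  rewrite W_rel, T_rel. change (sq a k (S n)) with (k * k * sq a k n + (1 - RtoC a * k))%C. ring.
Qed.

End Rep.

Lemma rsum_split N t h : rsum (N + t) h = rsum N h + rsum t (fun i => h (N + i)%nat).
Proof. induction t; simpl. rewrite Nat.add_0_r; ring. rewrite Nat.add_succ_r. simpl. rewrite IHt. ring. Qed.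

Lemma Cmod_le_sq (u w : C) : Cmod u ^ 2 <= Cmod w ^ 2 -> Cmod u <= Cmod w.
Proof. intro H. assert (0 <= Cmod u) by apply Cmod_ge_0. assert (0 <= Cmod w) by apply Cmod_ge_0.
  destruct (Rle_or_lt (Cmod u) (Cmod w)); auto. nra. Qed.

Lemma pow_le1 x n : 0 <= x <= 1 -> x ^ n <= 1.
Proof. intro H. induction n; simpl; [lra|]. assert (0 <= x ^ n) by (apply pow_le; lra). nra. Qed.

Lemma pow_le_mono x m n : 0 <= x <= 1 -> (m <= n)%nat -> x ^ n <= x ^ m.
Proof. intros H Hmn. replace n with (m + (n - m))%nat by lia. rewrite pow_add.
  assert (0 <= x ^ m) by (apply pow_le; lra). assert (x ^ (n - m) <= 1) by (apply pow_le1; lra).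
  assert (0 <= x ^ (n - m)) by (apply pow_le; lra). nra. Qed.

Section Bounds.
Variables (a : R) (k : C).
Hypothesis Ha : 0 <= a < 1.
Hypothesis Hk1 : Cmod k < 1.

Let c0 := Cmod (1 - RtoC a * k)%C.

Lemma c0_ge : 1 - a <= c0.
Proof. unfold c0. assert (H := Cmod_triangle (1 - RtoC a * k)%C (RtoC a * k)%C).
  replace (1 - RtoC a * k + RtoC a * k)%C with (RtoC 1) in H by ring.
  rewrite Cmod_1, Cmod_mult, Cmod_R, Rabs_right in H by lra.
  assert (a * Cmod k <= a * 1) by (apply Rmult_le_compat_l; lra). lra. Qed.

Lemma ka_le : Cmod (k - RtoC a)%C <= c0.
Proof. unfold c0. apply Cmod_le_sq. rewrite !Cmod2_alt.
  assert (H := Cmod2_alt k). assert (Cmod k ^ 2 < 1).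
  { assert (0 <= Cmod k) by apply Cmod_ge_0. nra. }
  destruct k as [x y]. unfold Re, Im in *. simpl in *.
  assert (0 <= (1 - a*a) * (1 - (x*x + y*y))) by (apply Rmult_le_pos; nra). nra. Qed.

Lemma s_diff : forall p, Cmod (sq a k (S p) - sq a k p)%C <= c0.
Proof. induction p.
  - simpl. replace (k * k * 1 + (1 - RtoC a * k) - 1)%C with (k * (k - RtoC a))%C by ring.
    rewrite Cmod_mult. assert (H := ka_le). assert (0 <= Cmod (k - RtoC a)%C) by apply Cmod_ge_0.
    assert (0 <= Cmod k) by apply Cmod_ge_0. fold c0 in H.
    assert (Cmod k * Cmod (k - RtoC a)%C <= 1 * Cmod (k - RtoC a)%C) by (apply Rmult_le_compat_r; lra). lra.
  - change (sq a k (S (S p))) with (k * k * sq a k (S p) + (1 - RtoC a * k))%C.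
    change (sq a k (S p)) with (k * k * sq a k p + (1 - RtoC a * k))%C at 2.
    replace (k * k * sq a k (S p) + (1 - RtoC a * k) - (k * k * sq a k p + (1 - RtoC a * k)))%C
      with (k * k * (sq a k (S p) - sq a k p))%C by ring.
    rewrite !Cmod_mult. assert (0 <= Cmod k) by apply Cmod_ge_0.
    assert (0 <= Cmod (sq a k (S p) - sq a k p)%C) by apply Cmod_ge_0.
    assert (Cmod k * Cmod k <= 1) by nra. nra. Qed.

Lemma s_bound : forall p, Cmod (sq a k p) <= c0 * Bd a p.
Proof. assert (Hc := c0_ge). induction p.
  - simpl. rewrite Cmod_1. unfold Bd. simpl INR.
    replace (c0 * (a / (1 - a) + 1)) with (c0 / (1 - a)) by (field; lra).
    apply Rmult_le_reg_l with (1 - a); [lra|]. field_simplify; lra.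
  - assert (H := Cmod_triangle (sq a k p) (sq a k (S p) - sq a k p)%C).
    replace (sq a k p + (sq a k (S p) - sq a k p))%C with (sq a k (S p)) in H by ring.
    assert (H2 := s_diff p). unfold Bd in *. rewrite (S_INR (S p)). lra. Qed.

Lemma T_bound f : forall n, Cmod (Tq a k f n) <= rsum (S n) (fun j => Cmod (sq a k j) * Cmod (f j)).
Proof. induction n.
  - simpl. rewrite Cmod_mult. lra.
  - change (Tq a k f (S n)) with (k * Tq a k f n + sq a k (S n) * f (S n))%C.
    eapply Rle_trans; [apply Cmod_triangle|]. rewrite !Cmod_mult.
    change (rsum (S (S n)) (fun j => Cmod (sq a k j) * Cmod (f j))) with
      (rsum (S n) (fun j => Cmod (sq a k j) * Cmod (f j)) + Cmod (sq a k (S n)) * Cmod (f (S n))).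
    assert (0 <= Cmod k) by apply Cmod_ge_0. assert (0 <= Cmod (Tq a k f n)) by apply Cmod_ge_0.
    assert (Cmod k * Cmod (Tq a k f n) <= 1 * Cmod (Tq a k f n)) by (apply Rmult_le_compat_r; lra). lra. Qed.

Lemma U_bound f n : forall t, Cmod (Uq a k f n t) <= Cmod (sq a k n) * rsum t (fun i => Cmod (f (S n + i)%nat)).
Proof. induction t.
  - simpl. rewrite Cmod_0. lra.
  - change (Uq a k f n (S t)) with (Uq a k f n t + sq a k n * k ^ (S t) * f (S n + t)%nat)%C.
    eapply Rle_trans; [apply Cmod_triangle|]. rewrite !Cmod_mult, Cmod_pow.
    change (rsum (S t) (fun i => Cmod (f (S n + i)%nat))) with
      (rsum t (fun i => Cmod (f (S n + i)%nat)) + Cmod (f (S n + t)%nat)).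
    assert (0 <= Cmod k) by apply Cmod_ge_0. 
    assert (Cmod k ^ S t <= 1) by (apply pow_le1; lra).
    assert (0 <= Cmod k ^ S t) by (apply pow_le; lra).
    assert (0 <= Cmod (sq a k n)) by apply Cmod_ge_0. assert (0 <= Cmod (f (S n + t)%nat)) by apply Cmod_ge_0.
    assert (Cmod (sq a k n) * Cmod k ^ S t * Cmod (f (S n + t)%nat) <= Cmod (sq a k n) * Cmod (f (S n + t)%nat)).
    { replace (Cmod (sq a k n) * Cmod k ^ S t * Cmod (f (S n + t)%nat)) with
        ((Cmod (sq a k n) * Cmod (f (S n + t)%nat)) * Cmod k ^ S t) by ring.
      assert (0 <= Cmod (sq a k n) * Cmod (f (S n + t)%nat)) by nra.
      assert ((Cmod (sq a k n) * Cmod (f (S n + t)%nat)) * Cmod k ^ S t <= (Cmod (sq a k n) * Cmod (f (S n + t)%nat)) * 1)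
        by (apply Rmult_le_compat_l; lra). lra. }
    nra.
Qed.
End Bounds.

Section KI.
Variables (a : R) (k z : C) (v psi : nat -> C).
Hypothesis Ha : 0 <= a < 1.
Hypothesis Hk0 : k <> RtoC 0.
Hypothesis Hk1 : Cmod k < 1.
Hypothesis Hz : z = (k + / k)%C.
Hypothesis Heig : forall n, JV a v psi n = (z * psi n)%C.

Lemma KI : forall n t,
  Cmod (psi n) <= Cmod k * (rsum (S n + t) (fun j => Bd a (Nat.min n j) * Cmod (Copp (Cmult (v j) (psi j))))
      + Bd a n * Cmod k ^ t * (Cmod (psi (n + t)%nat) + Cmod (psi (S (n + t))))).
Proof. intros n t.
  set (f := fun j => Copp (Cmult (v j) (psi j))).
  assert (R := rep a k z v psi Hk0 Hz Heig n t). fold f in R.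
  apply (f_equal Cmod) in R. rewrite !Cmod_mult, Cmod_opp in R.
  set (c0 := Cmod (1 - RtoC a * k)%C) in *.
  assert (Hc0 : 1 - a <= c0) by (apply c0_ge; auto).
  set (T := Tq a k f n) in *. set (U := Uq a k f n t) in *.
  set (W := (sq a k n * k ^ t * (k * psi (n + t)%nat - psi (S (n + t))))%C) in *.
  set (h := fun j => Bd a (Nat.min n j) * Cmod (f j)).
  assert (HT : Cmod T <= c0 * rsum (S n) h).
  { eapply Rle_trans; [apply T_bound; auto|]. rewrite <- rsum_scal. apply rsum_le.
    intros j Hj. unfold h. rewrite Nat.min_r by lia. rewrite <- Rmult_assoc.
    apply Rmult_le_compat_r; [apply Cmod_ge_0|]. apply s_bound; auto. }
  assert (HU : Cmod U <= c0 * rsum t (fun i => h (S n + i)%nat)).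
  { eapply Rle_trans; [apply U_bound; auto|]. rewrite <- !rsum_scal. unfold h. apply rsum_le. intros i Hi. rewrite Nat.min_l by lia.
    rewrite <- Rmult_assoc. apply Rmult_le_compat_r; [apply Cmod_ge_0|]. apply s_bound; auto. }
  assert (HW : Cmod W <= c0 * (Bd a n * Cmod k ^ t * (Cmod (psi (n + t)%nat) + Cmod (psi (S (n + t)))))).
  { unfold W. rewrite !Cmod_mult, Cmod_pow.
    assert (H1 : Cmod (k * psi (n + t)%nat - psi (S (n + t)))%C <= Cmod (psi (n + t)%nat) + Cmod (psi (S (n + t)))).
    { unfold Cminus. eapply Rle_trans; [apply Cmod_triangle|]. rewrite Cmod_opp, Cmod_mult.
      assert (0 <= Cmod (psi (n + t)%nat)) by apply Cmod_ge_0. assert (0 <= Cmod k) by apply Cmod_ge_0.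
      assert (Cmod k * Cmod (psi (n + t)%nat) <= 1 * Cmod (psi (n + t)%nat)) by (apply Rmult_le_compat_r; lra). lra. }
    assert (H2 := s_bound a k Ha Hk1 n). fold c0 in H2.
    assert (0 <= Cmod k ^ t) by (apply pow_le, Cmod_ge_0).
    assert (0 <= Cmod (sq a k n)) by apply Cmod_ge_0.
    assert (0 <= Cmod (k * psi (n + t)%nat - psi (S (n + t)))%C) by apply Cmod_ge_0.
    replace (c0 * (Bd a n * Cmod k ^ t * (Cmod (psi (n + t)%nat) + Cmod (psi (S (n + t))))))
      with ((c0 * Bd a n) * Cmod k ^ t * (Cmod (psi (n + t)%nat) + Cmod (psi (S (n + t))))) by ring.
    apply Rmult_le_compat; [nra|auto|apply Rmult_le_compat_r; auto|auto]. }
  assert (Hsum : Cmod (T + U + W)%C <= c0 * (rsum (S n + t) h + Bd a n * Cmod k ^ t * (Cmod (psi (n + t)%nat) + Cmod (psi (S (n + t)))))).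
  { eapply Rle_trans; [apply Cmod_triangle|]. 
    assert (H := Cmod_triangle T U). rewrite rsum_split. lra. }
  assert (Hc : 0 < c0) by lra.
  assert (c0 * Cmod (psi n) <= c0 * (Cmod k * (rsum (S n + t) h + Bd a n * Cmod k ^ t * (Cmod (psi (n + t)%nat) + Cmod (psi (S (n + t))))))).
  { rewrite R. assert (0 <= Cmod k) by apply Cmod_ge_0.
    replace (c0 * (Cmod k * (rsum (S n + t) h + Bd a n * Cmod k ^ t * (Cmod (psi (n + t)%nat) + Cmod (psi (S (n + t)))))))
      with (Cmod k * (c0 * (rsum (S n + t) h + Bd a n * Cmod k ^ t * (Cmod (psi (n + t)%nat) + Cmod (psi (S (n + t))))))) by ring.
    apply Rmult_le_compat_l; auto. }
  apply Rmult_le_reg_l with c0; auto.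
Qed.
End KI.

Lemma bounded_sup f B : (forall N, rsum N f <= B) ->
  exists X, (forall N, rsum N f <= X) /\ (forall Y, (forall N, rsum N f <= Y) -> X <= Y).
Proof. intro HB.
  destruct (completeness (fun x => exists N, x = rsum N f)) as [m [Hm1 Hm2]].
  - exists B. intros x [N ->]. apply HB.
  - exists 0, 0%nat. reflexivity.
  - exists m. split.
    + intro N. apply Hm1. eauto.
    + intros Y HY. apply Hm2. intros x [N ->]. apply HY.
Qed.

Lemma sq_ineq x c Y E : 0 <= x -> 0 < c < 1 -> 0 <= Y -> 0 <= E -> x <= c * (Y + E) ->
  x ^ 2 <= c * Y ^ 2 + c ^ 2 / (1 - c) * E ^ 2.
Proof. intros Hx Hc HY HE H.
  assert (x ^ 2 <= (c * (Y + E)) ^ 2) by (apply pow_incr; lra).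
  assert (c * Y ^ 2 + c ^ 2 / (1 - c) * E ^ 2 - (c * (Y + E)) ^ 2 = c / (1 - c) * ((1 - c) * Y - c * E) ^ 2)
    by (field; lra).
  assert (0 <= c / (1 - c) * ((1 - c) * Y - c * E) ^ 2).
  { apply Rmult_le_pos; [apply Rdiv_le_0_compat; lra| apply pow2_ge_0]. }
  lra. Qed.

Lemma csum_RR N (x y : nat -> R) : csum N (fun j => Cmult (RtoC (x j)) (RtoC (y j))) = RtoC (rsum N (fun j => x j * y j)).
Proof. induction N; simpl; [reflexivity|]. rewrite IHN. unfold RtoC, Cplus, Cmult; simpl. f_equal; ring. Qed.

Lemma rsum_const N c : rsum N (fun _ => c) = INR N * c.
Proof. induction N; simpl rsum; [simpl; ring|]. rewrite IHN, S_INR. ring. Qed.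

Lemma small_lim c K Z : 0 <= c < 1 -> 0 <= K -> (forall t, Z <= K * c ^ t) -> Z <= 0.
Proof. intros Hc HK H. destruct (Rle_or_lt Z 0) as [|HZ]; auto. exfalso.
  destruct (pow_lt_1_zero c ltac:(rewrite Rabs_right; lra) (Z / (K + 1))) as [N HN].
  { apply Rdiv_lt_0_compat; lra. }
  specialize (HN N (le_n N)). rewrite Rabs_right in HN by (apply Rle_ge, pow_le; lra).
  specialize (H N). assert (K * c ^ N <= K * (Z / (K + 1))) by (apply Rmult_le_compat_l; lra).
  assert (K * (Z / (K + 1)) < Z).
  { apply Rmult_lt_reg_l with (K + 1); [lra|]. field_simplify; [|lra]. nra. }
  lra. Qed.

Lemma BS_zero a k z v psi : 0 <= a < 1 -> k <> RtoC 0 -> Cmod k < 1 -> z = (k + / k)%C ->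
  (forall n, JV a v psi n = (z * psi n)%C) -> Kp_norm_le1 a v -> in_l2 psi ->
  forall n, psi n = RtoC 0.
Proof.
  intros Ha Hk0 Hk1 Hz Heig HK Hl.
  assert (Hv1 := v_le1 a v Ha HK).
  destruct (series_sup (fun n => Cmod (psi n) ^ 2) (fun n => pow2_ge_0 _) Hl) as [Xp [HXp _]].
  set (B := sqrt Xp).
  assert (HB : forall j, Cmod (psi j) <= B).
  { intro j. unfold B. rewrite <- (sqrt_pow2 (Cmod (psi j))) by apply Cmod_ge_0.
    apply sqrt_le_1_alt. eapply Rle_trans; [|apply (HXp (S j))].
    apply (rsum_term (S j) (fun n => Cmod (psi n) ^ 2)); [intro; apply pow2_ge_0|lia]. }
  assert (HB0 : 0 <= B) by apply sqrt_pos.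
  set (phi := fun j => sqrt (Cmod (v j)) * Cmod (psi j)).
  assert (Hphi0 : forall j, 0 <= phi j).
  { intro j. apply Rmult_le_pos; [apply sqrt_pos|apply Cmod_ge_0]. }
  assert (Hsv1 : forall j, sqrt (Cmod (v j)) <= 1).
  { intro j. rewrite <- sqrt_1. apply sqrt_le_1_alt. apply Hv1. }
  assert (Hphi2 : forall j, phi j ^ 2 <= Cmod (psi j) ^ 2).
  { intro j. unfold phi. rewrite Rpow_mult_distr. rewrite pow2_sqrt by apply Cmod_ge_0.
    assert (H := Hv1 j). assert (H0 := pow2_ge_0 (Cmod (psi j))).
    assert (Cmod (v j) * Cmod (psi j) ^ 2 <= 1 * Cmod (psi j) ^ 2) by (apply Rmult_le_compat_r; lra). lra. }
  destruct (bounded_sup (fun j => phi j ^ 2) Xp) as [Xf [HXf1 HXf2]].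
  { intro N. eapply Rle_trans; [|apply (HXp N)]. apply rsum_le. intros; apply Hphi2. }
  set (c := Cmod k).
  assert (Hc : 0 < c < 1). { split; auto. apply Cmod_gt_0; auto. }
  assert (Hf : forall j, Cmod (Copp (Cmult (v j) (psi j))) = sqrt (Cmod (v j)) * phi j).
  { intro j. rewrite Cmod_opp, Cmod_mult. unfold phi. rewrite <- Rmult_assoc, sqrtC_sq. reflexivity. }
  assert (PH : forall n t, phi n <= c * (rsum (S n + t) (fun j => Kp a v n j * phi j)
                 + Bd a n * c ^ t * (Cmod (psi (n + t)%nat) + Cmod (psi (S (n + t)))))).
  { intros n t. assert (H := KI a k z v psi Ha Hk0 Hk1 Hz Heig n t). fold c in H.
    assert (Hs0 : 0 <= sqrt (Cmod (v n))) by apply sqrt_pos.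
    assert (H1 : phi n <= sqrt (Cmod (v n)) * (c * (rsum (S n + t) (fun j => Bd a (Nat.min n j) * Cmod (Copp (Cmult (v j) (psi j))))
      + Bd a n * c ^ t * (Cmod (psi (n + t)%nat) + Cmod (psi (S (n + t))))))).
    { unfold phi. apply Rmult_le_compat_l; auto. }
    eapply Rle_trans; [apply H1|].
    rewrite Rmult_plus_distr_l, (Rmult_plus_distr_l c), Rmult_plus_distr_l.
    apply Rplus_le_compat.
    - right. rewrite <- !rsum_scal. apply rsum_ext. intros j _. rewrite Hf. unfold Kp, Bd. ring.
    - assert (0 <= c * (Bd a n * c ^ t * (Cmod (psi (n + t)%nat) + Cmod (psi (S (n + t)))))).
      { apply Rmult_le_pos; [lra|]. apply Rmult_le_pos; [apply Rmult_le_pos|].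
        - assert (H2 := Bd_ge1 a n Ha); lra. - apply pow_le; lra.
        - assert (H3 := Cmod_ge_0 (psi (n + t)%nat)). assert (H4 := Cmod_ge_0 (psi (S (n + t)))). lra. }
      assert (H5 := Hsv1 n).
      replace (sqrt (Cmod (v n)) * (c * (Bd a n * c ^ t * (Cmod (psi (n + t)%nat) + Cmod (psi (S (n + t)))))))
        with (sqrt (Cmod (v n)) * (c * (Bd a n * c ^ t * (Cmod (psi (n + t)%nat) + Cmod (psi (S (n + t))))))) by ring.
      nra. }
  set (K := c ^ 2 / (1 - c)).
  assert (HK0 : 0 <= K) by (unfold K; apply Rdiv_le_0_compat; [apply pow2_ge_0|lra]).
  assert (Main : forall Nn t, rsum Nn (fun j => phi j ^ 2) <= c * Xf + INR Nn * K * (Bd a Nn * (2 * B)) ^ 2 * c ^ t).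
  { intros Nn t. set (L := (Nn + t)%nat).
    set (Y := fun n => rsum (S L) (fun j => Kp a v n j * phi j)).
    set (Es := Bd a Nn * c ^ t * (2 * B)).
    assert (HY0 : forall n, 0 <= Y n).
    { intro. apply rsum_nonneg; intro; apply Rmult_le_pos; [apply Kp_nonneg; auto| auto]. }
    assert (HBd := Bd_ge1 a Nn Ha).
    assert (Hct : 0 <= c ^ t) by (apply pow_le; lra).
    assert (HEs : 0 <= Es) by (unfold Es; apply Rmult_le_pos; [apply Rmult_le_pos|]; lra).
    assert (Hpt : forall n, (n < Nn)%nat -> phi n ^ 2 <= c * Y n ^ 2 + K * Es ^ 2).
    { intros n Hn. apply sq_ineq; auto.
      assert (H := PH n (L - n)%nat).
      replace (S n + (L - n))%nat with (S L) in H by (unfold L; lia).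
      replace (n + (L - n))%nat with L in H by (unfold L; lia).
      eapply Rle_trans; [apply H|]. apply Rmult_le_compat_l; [lra|]. apply Rplus_le_compat_l.
      unfold Es. assert (H1 := Bd_ge1 a n Ha). assert (H2 := Bd_mono a n Nn ltac:(lia)).
      assert (H3 : c ^ (L - n) <= c ^ t) by (apply pow_le_mono; [lra|unfold L; lia]).
      assert (H4 := HB L). assert (H5 := HB (S L)).
      assert (0 <= c ^ (L - n)) by (apply pow_le; lra).
      assert (H6 := Cmod_ge_0 (psi L)). assert (H7 := Cmod_ge_0 (psi (S L))).
      apply Rmult_le_compat; [apply Rmult_le_pos; lra|lra|apply Rmult_le_compat; lra|lra]. }
    assert (HK' : rsum Nn (fun n => Y n ^ 2) <= rsum (S L) (fun j => phi j ^ 2)).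
    { assert (H := HK (fun j => RtoC (phi j)) (S L) Nn). cbv beta in H.
      assert (E1 : rsum Nn (fun m => Cmod (csum (S L) (fun k0 => Cmult (RtoC (Kp a v m k0)) (RtoC (phi k0)))) ^ 2)
                   = rsum Nn (fun n => Y n ^ 2)).
      { apply rsum_ext. intros m _. rewrite csum_RR, Cmod_R, pow2_abs. reflexivity. }
      assert (E2 : rsum (S L) (fun k0 => Cmod (RtoC (phi k0)) ^ 2) = rsum (S L) (fun j => phi j ^ 2)).
      { apply rsum_ext. intros m _. rewrite Cmod_R, pow2_abs. reflexivity. }
      rewrite E1, E2 in H. exact H. }
    eapply Rle_trans. { apply rsum_le. exact Hpt. }
    rewrite rsum_plus, rsum_scal, rsum_const.
    assert (rsum (S L) (fun j => phi j ^ 2) <= Xf) by apply HXf1.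
    assert (Es ^ 2 <= (Bd a Nn * (2 * B)) ^ 2 * c ^ t).
    { unfold Es. replace ((Bd a Nn * c ^ t * (2 * B)) ^ 2) with ((Bd a Nn * (2 * B)) ^ 2 * (c ^ t * c ^ t)) by ring.
      apply Rmult_le_compat_l; [apply pow2_ge_0|].
      assert (c ^ t <= 1) by (apply pow_le1; lra). nra. }
    assert (0 <= INR Nn) by apply pos_INR.
    assert (INR Nn * (K * Es ^ 2) <= INR Nn * K * (Bd a Nn * (2 * B)) ^ 2 * c ^ t).
    { replace (INR Nn * K * (Bd a Nn * (2 * B)) ^ 2 * c ^ t) with (INR Nn * (K * ((Bd a Nn * (2 * B)) ^ 2 * c ^ t))) by ring.
      apply Rmult_le_compat_l; auto. apply Rmult_le_compat_l; auto. }
    nra. }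
  assert (Hle : forall Nn, rsum Nn (fun j => phi j ^ 2) <= c * Xf).
  { intro Nn. assert (rsum Nn (fun j => phi j ^ 2) - c * Xf <= 0); [|lra].
    apply (small_lim c (INR Nn * K * (Bd a Nn * (2 * B)) ^ 2)); [lra| |].
    - apply Rmult_le_pos; [apply Rmult_le_pos; auto; apply pos_INR|apply pow2_ge_0].
    - intro t. specialize (Main Nn t). lra. }
  assert (HXf0 : Xf <= 0).
  { assert (H := HXf2 (c * Xf) Hle). assert (H0 := HXf1 0%nat). simpl in H0. nra. }
  assert (Hphi : forall j, phi j = 0).
  { intro j. assert (H := rsum_term (S j) (fun j => phi j ^ 2) j (fun n => pow2_ge_0 _) ltac:(lia)).
    assert (H0 := HXf1 (S j)). assert (H1 := Hphi0 j). nra. }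
  intro n. apply Cmod_eq_0.
  assert (H := KI a k z v psi Ha Hk0 Hk1 Hz Heig n). fold c in H.
  assert (Hz0 : forall t, rsum (S n + t) (fun j => Bd a (Nat.min n j) * Cmod (Copp (Cmult (v j) (psi j)))) = 0).
  { intro t. rewrite (rsum_ext _ _ (fun _ => 0 * 0)). rewrite rsum_scal; ring.
    intros j _. rewrite Hf, Hphi. ring. }
  assert (Cmod (psi n) <= 0); [|assert (H00 := Cmod_ge_0 (psi n)); lra].
  apply (small_lim c (c * Bd a n * (2 * B))); [lra| |].
  - assert (H1 := Bd_ge1 a n Ha). apply Rmult_le_pos; [apply Rmult_le_pos|]; lra.
  - intro t. specialize (H t). rewrite Hz0, Rplus_0_l in H. eapply Rle_trans; [apply H|].
    assert (H4 := HB (n + t)%nat). assert (H5 := HB (S (n + t))). assert (H1 := Bd_ge1 a n Ha).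
    assert (0 <= c ^ t) by (apply pow_le; lra).
    replace (c * Bd a n * (2 * B) * c ^ t) with (c * (Bd a n * c ^ t * (2 * B))) by ring.
    apply Rmult_le_compat_l; [lra|]. apply Rmult_le_compat_l; [nra|lra].
Qed.

Lemma csqrt_ex (d : C) : exists s : C, (s * s)%C = d.
Proof.
  destruct d as [x y].
  set (m := sqrt (x ^ 2 + y ^ 2)).
  assert (Hm2 : m * m = x ^ 2 + y ^ 2) by (apply sqrt_sqrt; nra).
  assert (Hm0 : 0 <= m) by apply sqrt_pos.
  assert (Hx1 : - m <= x <= m).
  { split; destruct (Rle_or_lt (-m) x), (Rle_or_lt x m); auto; try nra. }
  set (p := sqrt ((m + x) / 2)). set (q := sqrt ((m - x) / 2)).
  assert (Hp : p * p = (m + x) / 2) by (apply sqrt_sqrt; lra).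
  assert (Hq : q * q = (m - x) / 2) by (apply sqrt_sqrt; lra).
  assert (Hpq : p * q = Rabs y / 2).
  { unfold p, q. rewrite <- sqrt_mult by lra.
    replace ((m + x) / 2 * ((m - x) / 2)) with ((Rabs y / 2) ^ 2).
    - apply sqrt_pow2. assert (H := Rabs_pos y). lra.
    - replace ((m + x) / 2 * ((m - x) / 2)) with ((m * m - x ^ 2) / 4) by field.
      rewrite Hm2. replace ((Rabs y / 2) ^ 2) with (Rabs y ^ 2 / 4) by field. rewrite pow2_abs. field. }
  destruct (Rle_or_lt 0 y) as [Hy|Hy].
  - exists (p, q). unfold Cmult; simpl. rewrite Rabs_right in Hpq by lra.
    apply injective_projections; simpl; nra.
  - exists (p, - q). unfold Cmult; simpl. rewrite Rabs_left in Hpq by lra.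
    apply injective_projections; simpl; nra.
Qed.

Lemma k_exists (z : C) : ~ (snd z = 0 /\ -2 <= fst z <= 2) ->
  exists k : C, k <> RtoC 0 /\ Cmod k < 1 /\ z = (k + / k)%C.
Proof.
  intro Hz.
  destruct (csqrt_ex (z * z - 4)%C) as [s Hs].
  set (k1 := ((z + s) / 2)%C). set (k2 := ((z - s) / 2)%C).
  assert (Hprod : (k1 * k2)%C = RtoC 1).
  { unfold k1, k2. replace ((z + s) / 2 * ((z - s) / 2))%C with ((z * z - s * s) / 4)%C
      by (field; try (intro E; injection E; lra)).
    rewrite Hs. field; try (intro E; injection E; lra). }
  assert (Hsum : (k1 + k2)%C = z).
  { unfold k1, k2. field; try (intro E; injection E; lra). }
  assert (Hm := f_equal Cmod Hprod). rewrite Cmod_mult, Cmod_1 in Hm.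
  assert (exists k k', (k * k')%C = RtoC 1 /\ (k + k')%C = z /\ Cmod k <= 1).
  { destruct (Rle_or_lt (Cmod k1) 1).
    - exists k1, k2; auto.
    - exists k2, k1. split; [rewrite Cmult_comm; auto|]. split; [rewrite Cplus_comm; auto|].
      assert (0 <= Cmod k2) by apply Cmod_ge_0. nra. }
  destruct H as [k [k' [H1 [H2 H3]]]].
  assert (Hk0 : k <> RtoC 0).
  { intro E. rewrite E, Cmult_0_l in H1. injection H1. lra. }
  assert (Hk' : k' = (/ k)%C).
  { apply (f_equal (fun u => (/ k * u)%C)) in H1. rewrite Cmult_assoc, Cinv_l, Cmult_1_l in H1 by auto.
    rewrite H1. ring. }
  exists k. split; auto. split.
  - destruct (Rle_lt_or_eq_dec _ _ H3) as [H|H]; auto. exfalso. apply Hz.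
    rewrite <- H2, Hk'. assert (Hk2 := Cmod2_alt k). rewrite H in Hk2.
    destruct k as [x y]. unfold Re, Im in Hk2. simpl in Hk2.
    unfold Cinv, Cplus; simpl. replace (x * (x * 1) + y * (y * 1)) with 1 by nra.
    split; [field| ]. nra.
  - rewrite <- H2, Hk'. reflexivity.
Qed.

Definition delta0 : nat -> C := fun n => match n with O => RtoC 1 | S _ => RtoC 0 end.

Lemma delta0_l2 : in_l2 delta0.
Proof. unfold in_l2. apply ex_series_ext with (a := fun n => 0 ^ n).
  - intro n. destruct n; simpl; [rewrite Cmod_1; ring| rewrite Cmod_0; ring].
  - apply ex_series_geom. rewrite Rabs_R0; lra. Qed.

Lemma near_w (x eps : R) : -2 <= x <= 2 -> 0 < eps -> exists w, Rabs w < 2 /\ 0 < Rabs (w - x) < eps.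
Proof. intros Hx He. set (d := Rmin (eps / 2) 1).
  assert (0 < d) by (unfold d; apply Rmin_glb_lt; lra).
  assert (d <= eps / 2) by apply Rmin_l. assert (d <= 1) by apply Rmin_r.
  destruct (Rle_or_lt 0 x).
  - exists (x - d). replace (x - d - x) with (- d) by ring. rewrite Rabs_Ropp, (Rabs_right d) by lra.
    split; [apply Rabs_def1; lra| lra].
  - exists (x + d). replace (x + d - x) with d by ring. rewrite (Rabs_right d) by lra.
    split; [apply Rabs_def1; lra| lra].
Qed.

Theorem theorem5p7 (a : R) (v : nat -> C) :
  0 <= a < 1 -> Kp_norm_le1 a v ->
  forall z : C, ~ in_discrete_spectrum (JV a v) z.
Proof.
  intros Ha HK z [Heig [[Hsp [eps [Heps Hres]]] _]].
  destruct (classic (snd z = 0 /\ -2 <= fst z <= 2)) as [Hr|Hnr].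
  - destruct z as [x y]. simpl in Hr. destruct Hr as [Hy Hx]. subst y.
    destruct (near_w x eps Hx Heps) as [w [Hw Hwx]].
    assert (Hd : Cminus (RtoC w) (x, 0) = RtoC (w - x)).
    { apply injective_projections; simpl; ring. }
    assert (Hr := Hres (RtoC w) ltac:(rewrite Hd, Cmod_R; exact Hwx)).
    destruct (Hr delta0 delta0_l2) as [psi [[Hl _] [Heq _]]].
    destruct (v_sum a v Ha HK) as [Sv HSv].
    assert (Hz := no_l2_sol w v psi Sv Hw (v_le1 a v Ha HK) HSv Hl (fun n => Heq (S n))).
    assert (E := Heq O). unfold shift_op, JV in E. rewrite !Hz in E.
    apply (f_equal fst) in E. simpl in E. lra.
  - destruct (k_exists z Hnr) as [k [Hk0 [Hk1 Hzk]]].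
    destruct Heig as [psi [[Hl _] [[n Hn] Hev]]].
    apply Hn. exact (BS_zero a k z v psi Ha Hk0 Hk1 Hzk Hev HK Hl n).
Qed.
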